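(* Let $Q$ be a latin quandle and $u\in Q$. If the subquandle $\mathrm{Sg}(u,x,y)$ is simply connected for every $x,y\in Q$, then $Q$ is simply connected.
   Context: A quandle is a set $Q$ with a binary operation $*$ such that every left translation $L_x:y\mapsto x*y$ is bijective, $x*(y*z)=(x*y)*(x*z)$ and $x*x=x$; left division is $x\backslash y=L_x^{-1}(y)$. $Q$ is latin if every right translation $y\mapsto y*x$ is bijective, and connected if $\langle L_x:x\in Q\rangle$ is transitive. $\mathrm{Sg}(u,x,y)$ is the smallest subset of $Q$ containing $u,x,y$ and closed under $*$ and $\backslash$. For a set $S$, a quandle cocycle with values in $\mathrm{Sym}_S$ is $\theta:Q\times Q\to\mathrm{Sym}_S$ with $\theta_{x*y,x*z}\theta_{x,z}=\theta_{x,y*z}\theta_{y,z}$ and $\theta_{x,x}=1$; it is cohomologous to the trivial cocycle if there is $\gamma:Q\to\mathrm{Sym}_S$ with $\theta_{x,y}=\gamma_{x*y}\gamma_y^{-1}$ for all $x,y$. A quandle is simply connected if it is connected and, for every set $S$, every such cocycle is cohomologous to the trivial cocycle. *)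

(* Defs.v *)
From mathcomp Require Import ssreflect ssrfun ssrbool.
Set Implicit Arguments.
Unset Strict Implicit.

Section Quandles.
Variables (Q : Type) (op : Q -> Q -> Q) (ldiv : Q -> Q -> Q).
(* op x y = x * y ; ldiv x y = x \ y = L_x^{-1}(y) *)

Definition is_quandle : Prop :=
  [/\ forall x y, op x (ldiv x y) = y,
      forall x y, ldiv x (op x y) = y,
      forall x y z, op x (op y z) = op (op x y) (op x z)
    & forall x, op x x = x].

Definition latin : Prop := forall x, bijective (fun y => op y x).

Inductive Sg (u x y : Q) : Q -> Prop :=
  | Sg_u : Sg u x y u
  | Sg_x : Sg u x y x
  | Sg_y : Sg u x y y
  | Sg_op a b : Sg u x y a -> Sg u x y b -> Sg u x y (op a b)
  | Sg_ldiv a b : Sg u x y a -> Sg u x y b -> Sg u x y (ldiv a b).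

(* For a subset A closed under * and \ (a subquandle, with the inherited
   operations): orbit of a under the group generated by L_x, x in A. *)
Inductive orbit_in (A : Q -> Prop) (a : Q) : Q -> Prop :=
  | orb_refl : orbit_in A a a
  | orb_L x b : A x -> orbit_in A a b -> orbit_in A a (op x b)
  | orb_Linv x b : A x -> orbit_in A a b -> orbit_in A a (ldiv x b).

Definition connected_on (A : Q -> Prop) : Prop :=
  forall a b, A a -> A b -> orbit_in A a b.

(* Quandle cocycle on A with values in Sym_S, composition (f g)(s) = f (g s). *)
Definition cocycle_on (A : Q -> Prop) (S : Type) (theta : Q -> Q -> S -> S)
  : Prop :=
  [/\ forall x y, A x -> A y -> bijective (theta x y),
      forall x y z, A x -> A y -> A z -> forall s,
        theta (op x y) (op x z) (theta x z s) = theta x (op y z) (theta y z s)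
    & forall x, A x -> forall s, theta x x s = s].

(* theta_{x,y} = gamma_{x*y} gamma_y^{-1}, written as
   theta_{x,y} o gamma_y = gamma_{x*y} (gamma_y bijective). *)
Definition cohomologous_trivial_on (A : Q -> Prop) (S : Type)
  (theta : Q -> Q -> S -> S) : Prop :=
  exists gamma : Q -> S -> S,
    (forall x, A x -> bijective (gamma x)) /\
    (forall x y, A x -> A y -> forall s,
        theta x y (gamma y s) = gamma (op x y) s).

Definition simply_connected_on (A : Q -> Prop) : Prop :=
  connected_on A /\
  forall (S : Type) (theta : Q -> Q -> S -> S),
    cocycle_on A theta -> cohomologous_trivial_on A theta.

End Quandles.

(* Main.v *)
Require Import Defs.
From mathcomp Require Import ssreflect ssrfun ssrbool.
From Stdlib Require Import ClassicalEpsilon.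

Section Aux.
Variables (Q : Type) (op ldiv : Q -> Q -> Q).

Lemma Sg_sub (A : Q -> Prop) u x y :
  A u -> A x -> A y ->
  (forall a b, A a -> A b -> A (op a b)) ->
  (forall a b, A a -> A b -> A (ldiv a b)) ->
  forall z, Sg op ldiv u x y z -> A z.
Proof.
move=> Hu Hx Hy Hop Hld z Hz; elim: Hz => //; auto.
Qed.

Lemma orbit_mono (A B : Q -> Prop) a b :
  (forall z, A z -> B z) -> orbit_in op ldiv A a b -> orbit_in op ldiv B a b.
Proof.
move=> AB H; elim: H => [|x c Ax _ IH|x c Ax _ IH].
- exact: orb_refl.
- exact: orb_L (AB _ Ax) IH.
- exact: orb_Linv (AB _ Ax) IH.
Qed.

Lemma triv_uniq (A : Q -> Prop) S (theta : Q -> Q -> S -> S) (u : Q)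
  (g g' : Q -> S -> S) :
  is_quandle op ldiv ->
  connected_on op ldiv A -> A u ->
  (forall a b, A a -> A b -> A (op a b)) ->
  (forall a b, A a -> A b -> A (ldiv a b)) ->
  (forall x y, A x -> A y -> injective (theta x y)) ->
  (forall x y, A x -> A y -> forall s, theta x y (g y s) = g (op x y) s) ->
  (forall x y, A x -> A y -> forall s, theta x y (g' y s) = g' (op x y) s) ->
  (forall s, g u s = g' u s) ->
  forall b, A b -> forall s, g b s = g' b s.
Proof.
move=> [H1 _ _ _] Hc Au Hop Hld Hinj Hg Hg' Hgu b Ab.
have Ho := Hc u b Au Ab.
suff: A b /\ forall s, g b s = g' b s by case.
elim: Ho => [|x c Ax _ [Ac IH]|x c Ax _ [Ac IH]].
- by split.
- split; first exact: Hop.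
  move=> s; by rewrite -Hg // -Hg' // IH.
- have Ad := Hld _ _ Ax Ac; split => // s.
  apply: (Hinj x (ldiv x c) Ax Ad).
  by rewrite Hg // Hg' // H1 IH.
Qed.

End Aux.

Theorem proposition3p6 (Q : Type) (op ldiv : Q -> Q -> Q) (u : Q) :
  is_quandle op ldiv -> latin op ->
  (forall x y : Q, simply_connected_on op ldiv (Sg op ldiv u x y)) ->
  simply_connected_on op ldiv (fun _ : Q => True).
Proof.
move=> HQ _ Hsc; split.
  move=> a b _ _; have [Hc _] := Hsc a b.
  by apply: (@orbit_mono Q op ldiv (Sg op ldiv u a b)) => //; apply: Hc; constructor.
move=> S theta [Hbij Hcoc Hid].
have Sop y z : forall a b, Sg op ldiv u y z a -> Sg op ldiv u y z b ->
   Sg op ldiv u y z (op a b) by move=> a b; apply: Sg_op.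
have Sld y z : forall a b, Sg op ldiv u y z a -> Sg op ldiv u y z b ->
   Sg op ldiv u y z (ldiv a b) by move=> a b; apply: Sg_ldiv.
have norm : forall y z, exists g : Q -> S -> S,
   (forall a, Sg op ldiv u y z a -> bijective (g a)) /\
   (forall a b, Sg op ldiv u y z a -> Sg op ldiv u y z b ->
      forall s, theta a b (g b s) = g (op a b) s) /\
   (forall s, g u s = s).
  move=> y z; have [_ Ht] := Hsc y z.
  have [|g [gb ge]] := Ht S theta.
    split; [by move=> *; apply: Hbij|by move=> *; apply: Hcoc|by move=> *; apply: Hid].
  have [h h1 h2] := gb u (Sg_u _ _ _ _ _).
  exists (fun a s => g a (h s)); split; [|split].
  - move=> a Ha; apply: bij_comp; first exact: gb.
    by exists (g u).
  - by move=> a b Ha Hb s; rewrite ge.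
  - by move=> s; rewrite h2.
pose gam x := proj1_sig (constructive_indefinite_description _ (norm x x)) x.
have gamP x : exists g : Q -> S -> S,
   (forall a, Sg op ldiv u x x a -> bijective (g a)) /\
   (forall a b, Sg op ldiv u x x a -> Sg op ldiv u x x b ->
      forall s, theta a b (g b s) = g (op a b) s) /\
   (forall s, g u s = s) /\ g x = gam x.
  rewrite /gam; case: (constructive_indefinite_description _ (norm x x)) => g [? [? ?]] /=.
  by exists g.
have key : forall x y (d : Q -> S -> S),
   (forall a b, Sg op ldiv u x y a -> Sg op ldiv u x y b ->
      forall s, theta a b (d b s) = d (op a b) s) ->
   (forall s, d u s = s) ->
   forall z, Sg op ldiv u x y z -> forall s, d z s = gam z s.
  move=> x y d de du z Hz s.
  have [g [gb [ge [gu <-]]]] := gamP z.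
  have sub : forall w, Sg op ldiv u z z w -> Sg op ldiv u x y w.
    by apply: Sg_sub; [exact: Sg_u|exact: Hz|exact: Hz|exact: Sop|exact: Sld].
  apply: (@triv_uniq Q op ldiv (Sg op ldiv u z z) S theta u).
  - done.
  - by have [] := Hsc z z.
  - exact: Sg_u.
  - exact: Sop.
  - exact: Sld.
  - by move=> a b _ _; apply: bij_inj; apply: Hbij.
  - by move=> a b Ha Hb; apply: de; apply: sub.
  - exact: ge.
  - by move=> s'; rewrite du gu.
  - exact: Sg_x.
exists gam; split.
  move=> x _; have [g [gb [_ [_ <-]]]] := gamP x; apply: gb; exact: Sg_x.
move=> x y _ _ s.
have Hxy : Sg op ldiv u x y (op x y) by apply: Sg_op; [apply: Sg_x|apply: Sg_y].
have [d [db [de du]]] := norm x y.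
rewrite -(key x y d de du y (Sg_y _ _ _ _ _)) -(key x y d de du _ Hxy).
apply: de; [exact: Sg_x|exact: Sg_y].
Qed.
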